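(* Let $N\geq 3$, $p>1$, $m\in\mathbb N$ and $\alpha_p:=\max\left\{0,\frac{p(N-2)-(N+2)}{2}\right\}$. For $\alpha>\alpha_p$ let $u_\alpha$ be the unique radial solution of $-\Delta u=|x|^\alpha|u|^{p-1}u$ in $B^N$, $u=0$ on $\partial B^N$, with exactly $m$ nodal sets and $u_\alpha(0)>0$. Then there exists a constant $C>0$, not depending on $\alpha$, such that $$\|u_\alpha\|_\infty\geq C\left(\frac{\alpha+N}{N}\right)^{\frac{2}{p-1}}\quad\forall\alpha>\alpha_p.$$
   Context: $B^N$ is the open unit ball in $\mathbb R^N$ centered at the origin. A nodal set is a connected component of the set where the function does not vanish. *)

(* Defs.v *)
From HB Require Import structures.
From mathcomp Require Import all_boot all_order all_algebra.
From mathcomp Require Import all_classical all_reals all_analysis.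
Set Implicit Arguments. Unset Strict Implicit. Unset Printing Implicit Defensive.
Import Order.TTheory GRing.Theory Num.Theory.
Import numFieldNormedType.Exports.
Local Open Scope classical_set_scope.
Local Open Scope ring_scope.

(* Euclidean norm |x| (the library norm on matrices is the max-norm). *)
Definition enorm (R : realType) (N : nat) (x : 'rV[R]_N) : R :=
  Num.sqrt (\sum_(i < N) (x ord0 i) ^+ 2).

Definition ballN (R : realType) (N : nat) : set 'rV[R]_N :=
  [set x | enorm x < 1].
Definition cballN (R : realType) (N : nat) : set 'rV[R]_N :=
  [set x | enorm x <= 1].
Arguments ballN : clear implicits.
Arguments cballN : clear implicits.

Definition evec (R : realType) (N : nat) (i : 'I_N) : 'rV[R]_N := delta_mx 0 i.

Definition pd (R : realType) (N : nat) (i : 'I_N) (u : 'rV[R]_N -> R)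
  : 'rV[R]_N -> R := fun x => 'D_(@evec R N i) u x.
Arguments pd {R N} i u.
Arguments evec {R N} i.

Definition C2_in_ball_C0_closed (R : realType) (N : nat) (u : 'rV[R]_N -> R) : Prop :=
  {within cballN R N, continuous u} /\
  (forall x, ballN R N x ->
     forall i j : 'I_N,
       derivable u x (evec i) /\
       derivable (pd i u) x (evec j) /\
       {for x, continuous u} /\
       {for x, continuous (pd i u)} /\
       {for x, continuous (pd j (pd i u))}).

Definition laplacian (R : realType) (N : nat) (u : 'rV[R]_N -> R) (x : 'rV[R]_N) : R :=
  \sum_(i < N) pd i (pd i u) x.

Definition radial (R : realType) (N : nat) (u : 'rV[R]_N -> R) : Prop :=
  forall x y, cballN R N x -> cballN R N y -> enorm x = enorm y -> u x = u y.

Definition henon_dirichlet_sol (R : realType) (N : nat) (p alpha : R)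
  (u : 'rV[R]_N -> R) : Prop :=
  C2_in_ball_C0_closed u /\
  (forall x, ballN R N x ->
     - laplacian u x = (enorm x) `^ alpha * (`|u x| `^ (p - 1)) * u x) /\
  (forall x, enorm x = 1 -> u x = 0).

Definition nodal_sets (R : realType) (N : nat) (u : 'rV[R]_N -> R)
  : set (set 'rV[R]_N) :=
  let A := [set x | ballN R N x /\ u x <> 0] in
  [set connected_component A x | x in A].

Definition has_m_nodal_sets (R : realType) (N : nat) (m : nat)
  (u : 'rV[R]_N -> R) : Prop :=
  exists f : 'I_m -> set 'rV[R]_N, injective f /\ range f = nodal_sets u.

Definition alpha_p (R : realType) (N : nat) (p : R) : R :=
  Num.max 0 ((p * (N%:R - 2) - (N%:R + 2)) / 2).

Definition sup_norm (R : realType) (N : nat) (u : 'rV[R]_N -> R) : R :=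
  sup [set `|u x| | x in ballN R N].

(* Main.v *)
Require Import Defs.
From HB Require Import structures.
From mathcomp Require Import all_boot all_order all_algebra.
From mathcomp Require Import all_classical all_reals all_analysis.
From mathcomp Require Import ring lra.
Import Order.TTheory GRing.Theory Num.Theory.
Import numFieldNormedType.Exports.
Local Open Scope classical_set_scope.
Local Open Scope ring_scope.
Set Implicit Arguments. Unset Strict Implicit.

Section H.
Variables (R : realType) (N : nat).
Implicit Types x y : 'rV[R]_N.

Definition sq x : R := \sum_(i < N) (x ord0 i) ^+ 2.

Lemma sq_ge0 x : 0 <= sq x.
Proof. by apply: sumr_ge0 => i _; exact: sqr_ge0. Qed.

Lemma coord_le_sq x i : (x ord0 i) ^+ 2 <= sq x.
Proof.
rewrite /sq (bigD1 i) //= lerDl; apply: sumr_ge0 => j _; exact: sqr_ge0.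
Qed.

Lemma enormE x : enorm x = Num.sqrt (sq x).
Proof. by []. Qed.

Lemma enorm_lt1 x : (enorm x < 1) = (sq x < 1).
Proof. by rewrite enormE -{1}sqrtr1 ltr_sqrt. Qed.

Lemma enorm_le1 x : (enorm x <= 1) = (sq x <= 1).
Proof. by rewrite enormE -{1}sqrtr1 ler_sqrt. Qed.

Lemma enorm_eq1 x : enorm x = 1 -> sq x = 1.
Proof. by move=> h; rewrite -(sqr_sqrtr (sq_ge0 x)) -enormE h expr1n. Qed.

Lemma line_coord x i (t : R) j :
  (t *: evec i + x) ord0 j = t * (j == i)%:R + x ord0 j.
Proof. by rewrite !mxE eqxx. Qed.

Lemma sq_line x i (t : R) :
  sq (t *: evec i + x) = sq x + 2 * t * x ord0 i + t ^+ 2.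
Proof.
rewrite /sq (bigD1 i) //= [in RHS](bigD1 i) //= line_coord eqxx mulr1.
rewrite (eq_bigr (fun j => x ord0 j ^+ 2)); last first.
  by move=> j /negbTE ji; rewrite line_coord ji mulr0 add0r.
rewrite sqrrD; lra.
Qed.

Lemma sq_continuous : continuous sq.
Proof.
rewrite /sq => z.
pose F := fun (i : 'I_N) (v : 'rV[R]_N) => v ord0 i ^+ 2.
have -> : (fun v : 'rV[R]_N => \sum_(i < N) v ord0 i ^+ 2) = \sum_(i < N) F i.
  by apply/funext => v; rewrite fct_sumE.
elim/big_ind: _ => //.
- exact: cst_continuous.
- by move=> f g cf cg; apply: continuousD.
- move=> i _; rewrite /F; apply: continuousM; exact: coord_continuous.
Qed.

Lemma cball_compact : compact (cballN R N).
Proof.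
have -> : cballN R N = [set v | sq v <= 1].
  by apply/seteqP; split => v; rewrite /cballN /= enorm_le1.
have cB := @rV_compact R N (fun=> `[-1, 1]%classic) (fun=> @segment_compact R (-1) 1).
apply: (subclosed_compact _ cB).
- apply: (@preimage_closed _ _ sq [set r : R | r <= 1]).
    by move=> v _; exact: sq_continuous.
  exact: closed_le.
- move=> v /= hv i; rewrite /= in_itv /=.
  have := le_trans (coord_le_sq v i) hv.
  move=> h; apply/andP; split; nra.
Qed.
End H.


Section H2.
Variable R : realType.

Lemma D_line n (g : 'rV[R]_n -> R) (x v : 'rV[R]_n) (t : R) :
  derivable g (t *: v + x) v ->
  is_derive t 1 (fun s => g (s *: v + x)) ('D_v g (t *: v + x)).
Proof.
have E : (fun h : R => h^-1 *: (((fun s => g (s *: v + x)) \o shift t) (h *: 1)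
             - g (t *: v + x))) =
         (fun h : R => h^-1 *: ((g \o shift (t *: v + x)) (h *: v) - g (t *: v + x))).
  apply/funext => h /=; congr (_ *: (g _ - _)).
  by rewrite scalerDl addrA [h *: 1]mulr1.
move=> dg; split.
  by rewrite /derivable E.
by rewrite /derive E.
Qed.

Lemma sd_max (phi phi1 : R -> R) (d D : R) : 0 < d ->
  (forall t : R, `|t| < d -> phi t <= phi 0) ->
  (forall t : R, `|t| < d -> is_derive t (1:R) phi (phi1 t)) ->
  is_derive (0:R) (1:R) phi1 D -> D <= 0.
Proof.
move=> d0 hmax hder hD.
have F0 : phi1 0 = 0.
  have H0 : is_derive (0:R) (1:R) phi 0.
    apply: (@derive1_at_max _ phi (- d) d 0).
    - lra.
    - move=> t; rewrite in_itv /= => /andP[h1 h2].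
      have ht : `|t| < d by rewrite ltr_norml h1 h2.
      by case: (hder t ht).
    - by rewrite in_itv /=; apply/andP; split; lra.
    - move=> t; rewrite in_itv /= => /andP[h1 h2]; apply: hmax.
      by rewrite ltr_norml h1 h2.
  have [_ <-] := hder 0 (ltac:(by rewrite normr0)).
  by rewrite derive_val.
rewrite leNgt; apply/negP => Dpos.
have C : (fun h : R => h^-1 *: ((phi1 \o shift 0) (h *: 1) - phi1 0)) @ 0^' --> D.
  have [dd vv] := hD; rewrite -vv.
  exact: dd.
have := cvgr_gt D C 0 Dpos.
rewrite near_withinE => /(_ (dnbhs_filter 0)) /nbhs_ballP [e /= e0 He].
have /andP[m1 m2] : (Num.min e d <= e) && (Num.min e d <= d) by rewrite -le_min.
pose t := Num.min e d / 2.
have t0 : 0 < t by rewrite /t divr_gt0 // lt_min e0 d0.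
have te : t < e by rewrite /t; lra.
have td : t < d by rewrite /t; lra.
have [c c0t Hc] : exists2 c, c \in `]0, t[ & phi t - phi 0 = phi1 c * (t - 0).
  apply: MVT => //.
  - move=> z; rewrite in_itv /= => /andP[z1 z2]; apply: hder.
    rewrite ger0_norm; lra.
  - apply: derivable_within_continuous => z; rewrite in_itv /= => /andP[z1 z2].
    have hz : `|z| < d by rewrite ger0_norm; lra.
    by case: (hder z hz).
move: c0t; rewrite in_itv /= => /andP[c1 c2].
have := He c; rewrite /ball /= sub0r normrN ger0_norm ?(ltW c1) //.
move=> /(_ (lt_trans c2 te)) /(_ (lt0r_neq0 c1)).
rewrite F0 subr0 [c%:A]mulr1 addr0 => hc.
have : 0 < phi1 c by move: hc; rewrite pmulr_rgt0 // invr_gt0.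
have := hmax t; rewrite ger0_norm ?(ltW t0) // => /(_ td).
move: Hc; rewrite subr0 => Hc hle hp.
have : 0 < phi1 c * t by apply: mulr_gt0.
lra.
Qed.
End H2.


Section H3.
Variable R : realType.
Variables (s xi cc eps : R) (k : nat).

Definition Qp : {poly R} := s%:P + (2 * xi) *: 'X + 'X^2.
Definition Pip : {poly R} := cc *: Qp ^+ k.+1 + eps *: Qp.

Lemma Qp_eval t : Qp.[t] = s + 2 * t * xi + t ^+ 2.
Proof. rewrite /Qp !hornerE; ring. Qed.

Lemma Qp_d : Qp^`() = (2 * xi)%:P + 'X *+ 2.
Proof. by rewrite /Qp !derivD derivC derivZ derivX derivXn /= add0r alg_polyC expr1. Qed.

Lemma Qd_eval t : Qp^`().[t] = 2 * xi + 2 * t.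
Proof. by rewrite Qp_d hornerD hornerC hornerMn hornerX -[t *+ 2]mulr_natl. Qed.

Lemma Qdd_eval t : Qp^`()^`().[t] = 2.
Proof. by rewrite Qp_d derivD derivC derivMn derivX add0r hornerMn hornerC. Qed.

Lemma Pid_eval t : Pip^`().[t] =
  cc * (k.+1%:R * Qp^`().[t] * Qp.[t] ^+ k) + eps * Qp^`().[t].
Proof.
rewrite /Pip derivD !derivZ deriv_exp /= hornerD !hornerZ hornerMn hornerM horner_exp.
by rewrite -[k.+1%:R * _ * _]mulrA mulr_natl.
Qed.

Lemma Pidd_eval : Pip^`()^`().[0] =
  cc * k.+1%:R * (k%:R * s ^+ k.-1 * (2 * xi) ^+ 2 + 2 * s ^+ k) + 2 * eps.
Proof.
rewrite /Pip derivD !derivZ deriv_exp /= derivD !derivZ derivMn derivM deriv_exp.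
rewrite hornerD !hornerZ !hornerMn hornerD !hornerM !hornerMn hornerM !horner_exp.
rewrite !Qdd_eval !Qd_eval Qp_eval.
have -> : s + 2 * 0 * xi + 0 ^+ 2 = s by rewrite expr2 !(mulr0, mul0r, addr0).
have -> : 2 * xi + 2 * 0 = 2 * xi by rewrite mulr0 addr0.
ring.
Qed.
End H3.


Section H4.
Variables (R : realType) (N : nat).

Lemma dir_bound (u : 'rV[R]_N -> R) (sg cc eps : R) (k : nat) (x : 'rV[R]_N) (i : 'I_N) :
  (forall y, ballN R N y -> forall i j : 'I_N,
       derivable u y (evec i) /\ derivable (pd i u) y (evec j)) ->
  sq x < 1 ->
  (forall y, cballN R N y ->
     sg * u y + cc * sq y ^+ k.+1 + eps * sq y <=
     sg * u x + cc * sq x ^+ k.+1 + eps * sq x) ->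
  sg * pd i (pd i u) x + (Pip (sq x) (x ord0 i) cc eps k)^`()^`().[0] <= 0.
Proof.
move=> hD sx1 hmax.
set s := sq x; set xi := x ord0 i; set P := Pip s xi cc eps k.
have s0 : 0 <= s := sq_ge0 x.
have xi1 : xi ^+ 2 <= s := coord_le_sq x i.
pose d := (1 - s) / 3.
have s1 : s < 1 by [].
have d0 : 0 < d by rewrite /d; lra.
have inball t : `|t| < d -> ballN R N (t *: evec i + x).
  move=> ht; rewrite /ballN /= enorm_lt1 sq_line -/s -/xi.
  move: ht; rewrite ltr_norml => /andP[t1 t2].
  have xb : -1 <= xi <= 1.
    rewrite -ler_norml.
    have n0 := normr_ge0 xi.
    have : `|xi| ^+ 2 <= 1 by rewrite real_normK ?num_real //; lra.
    nra.
  move: xb => /andP[xa xb].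
  have p1 : 0 <= (d - t) * (1 + xi) by apply: mulr_ge0; lra.
  have p2 : 0 <= (d + t) * (1 - xi) by apply: mulr_ge0; lra.
  have p3 : t ^+ 2 < d ^+ 2 by rewrite -real_normK ?num_real // ltr_pXn2r // ?nnegrE ?ltW // ltr_norml t1 t2.
  have p4 : d ^+ 2 <= d / 3 by rewrite expr2 ler_pM2l // /d; lra.
  rewrite /d in p1 p2 p4 p3 *; nra.
pose phi t := sg * u (t *: evec i + x) + P.[t].
pose phi1 t := sg * pd i u (t *: evec i + x) + P^`().[t].
have hPt t : P.[t] = cc * sq (t *: evec i + x) ^+ k.+1 + eps * sq (t *: evec i + x).
  by rewrite /P /Pip hornerD !hornerZ horner_exp sq_line Qp_eval.
have ex0 : 0 *: evec i + x = x by rewrite scale0r add0r.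
apply: (@sd_max _ phi phi1 d) => //.
- move=> t ht; rewrite /phi !hPt ex0 !addrA; apply: hmax.
  by rewrite /cballN /= ltW //; apply: inball.
- move=> t ht.
  have [h1 _] := hD _ (inball t ht) i i.
  exact: (is_deriveD (is_deriveZ sg (D_line h1)) (is_derive_poly P t)).
- have bx : ballN R N x by rewrite /ballN /= enorm_lt1.
  have [_ h2] := hD x bx i i.
  rewrite -ex0 in h2.
  have := is_deriveD (is_deriveZ sg (D_line h2)) (is_derive_poly P^`() 0).
  by rewrite ex0.
Qed.

Lemma no_interior_max (u : 'rV[R]_N -> R) (sg cc eps Q : R) (k : nat) (x : 'rV[R]_N) :
  (0 < N)%N -> 0 < eps ->
  (forall y, ballN R N y -> forall i j : 'I_N,
       derivable u y (evec i) /\ derivable (pd i u) y (evec j)) ->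
  sq x < 1 ->
  (forall y, cballN R N y ->
     sg * u y + cc * sq y ^+ k.+1 + eps * sq y <=
     sg * u x + cc * sq x ^+ k.+1 + eps * sq x) ->
  - (sg * laplacian u x) <= Q * sq x ^+ k ->
  cc * k.+1%:R * (4 * k%:R + 2 * N%:R) = Q -> False.
Proof.
move=> N0 e0 hD sx1 hmax hlap hQ.
have H : \sum_(i < N) (sg * pd i (pd i u) x +
    (Pip (sq x) (x ord0 i) cc eps k)^`()^`().[0]) <= 0.
  by apply: sumr_le0 => i _; exact: dir_bound.
set s := sq x in H hlap.
have E : \sum_(i < N) (sg * pd i (pd i u) x +
    (Pip s (x ord0 i) cc eps k)^`()^`().[0]) =
    sg * laplacian u x + (cc * k.+1%:R * k%:R * s ^+ k.-1 * 4) * s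
    + (cc * k.+1%:R * 2 * s ^+ k + 2 * eps) * N%:R.
  rewrite big_split /= -mulr_sumr.
  rewrite [X in _ + X = _](eq_bigr (fun i => (cc * k.+1%:R * k%:R * s ^+ k.-1 * 4) * (x ord0 i ^+ 2)
       + (cc * k.+1%:R * 2 * s ^+ k + 2 * eps))); last first.
    by move=> i _; rewrite Pidd_eval; ring.
  rewrite big_split /= -mulr_sumr sumr_const card_ord -[_ *+ N]mulr_natr.
  by rewrite /laplacian -addrA.
rewrite E in H.
have Ek : k%:R * s ^+ k.-1 * s = k%:R * s ^+ k.
  by case: k {hmax hlap hQ H E} => [|k]; rewrite ?mul0r // -mulrA -exprSr.
have Nr : 0 < N%:R :> R by rewrite ltr0n.
have e1 : cc * k.+1%:R * k%:R * s ^+ k.-1 * 4 * s = cc * k.+1%:R * 4 * (k%:R * s ^+ k).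
  by rewrite -Ek; ring.
have e2 : Q * s ^+ k = cc * k.+1%:R * 4 * (k%:R * s ^+ k) + cc * k.+1%:R * 2 * s ^+ k * N%:R.
  by rewrite -hQ; ring.
have e3 : 0 < eps * N%:R by rewrite mulr_gt0.
rewrite e1 in H.
lra.
Qed.
End H4.


Section H5.
Variables (R : realType) (N : nat).

Lemma within_norm (u : 'rV[R]_N -> R) :
  {within cballN R N, continuous u} -> {within cballN R N, continuous (fun y => `|u y|)}.
Proof.
move=> hc z; apply: continuous_comp; first exact: hc.
exact: norm_continuous.
Qed.

Lemma within_h (u : 'rV[R]_N -> R) (sg cc eps : R) (k : nat) :
  {within cballN R N, continuous u} ->
  {within cballN R N, continuous (fun y => sg * u y + cc * sq y ^+ k.+1 + eps * sq y)}.
Proof.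
move=> hc.
pose P : {poly R} := cc *: 'X^(k.+1) + eps *: 'X.
have cP : {within cballN R N, continuous (fun y => P.[sq y])}.
  apply: continuous_subspaceT => y.
  apply: continuous_comp; [exact: sq_continuous | exact: continuous_horner].
have e : (fun y => sg * u y + cc * sq y ^+ k.+1 + eps * sq y) =
  (sg \*: u) + (fun y => P.[sq y]).
  apply/funext => y; transitivity (sg * u y + P.[sq y]); last by [].
  rewrite /P hornerD !hornerZ hornerXn hornerX; ring.
rewrite e => z.
apply: continuousD; last exact: cP.
apply: continuousZl_tmp; exact: hc.
Qed.

Lemma pde_bound (u : 'rV[R]_N -> R) (p alpha M sg : R) (k : nat) (x : 'rV[R]_N) :
  1 < p -> 0 < alpha -> (2 * k)%:R <= alpha -> sg = 1 \/ sg = -1 ->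
  `|u x| <= M -> sq x < 1 ->
  - laplacian u x = (enorm x) `^ alpha * (`|u x| `^ (p - 1)) * u x ->
  - (sg * laplacian u x) <= M `^ (p - 1) * M * sq x ^+ k.
Proof.
move=> p1 a0 ka hsg hM sx1 hpde.
have -> : - (sg * laplacian u x) = sg * (- laplacian u x) by ring.
rewrite hpde.
set f := _ * _ * u x.
have : sg * f <= `|f|.
  by case: hsg => ->; rewrite ?mul1r ?mulN1r ?ler_norm // -normrN ler_norm.
move=> /le_trans; apply.
rewrite /f !normrM ger0_norm ?powR_ge0 // ger0_norm ?powR_ge0 //.
have e1 : enorm x `^ alpha <= sq x ^+ k.
  have s0 := sq_ge0 x.
  have [s00|sp] := eqVneq (sq x) 0.
    by rewrite enormE s00 sqrtr0 powR0 ?gt_eqF // exprn_ge0 // s00.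
  have e0 : 0 < enorm x by rewrite enormE sqrtr_gt0 lt_def sp s0.
  have e1 : enorm x <= 1 by rewrite enorm_le1 ltW.
  apply: (le_trans (ger_powR _ ka)); first by rewrite e0 e1.
  by rewrite (powR_mulrn _ (ltW e0)) exprM enormE sqr_sqrtr.
have e2 : `|u x| `^ (p - 1) <= M `^ (p - 1).
  have M0 : 0 <= M := le_trans (normr_ge0 _) hM.
  apply: ge0_ler_powR; [lra| by rewrite nnegrE | by rewrite nnegrE | exact: hM].
have M0 : 0 <= M := le_trans (normr_ge0 _) hM.
have -> : M `^ (p - 1) * M * sq x ^+ k = (sq x ^+ k * M `^ (p - 1)) * M by ring.
apply: ler_pM => //.
- by rewrite mulr_ge0 ?powR_ge0.
- by apply: ler_pM => //; rewrite ?powR_ge0.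
Qed.
End H5.

Unset Implicit Arguments.


Lemma sq0 (R : realType) (N : nat) : sq (0 : 'rV[R]_N) = 0.
Proof. by rewrite /sq big1 // => i _; rewrite mxE expr0n. Qed.

Theorem lemma3p1 (R : realType) (N : nat) (p : R) (m : nat) :
  (3 <= N)%N -> 1 < p ->
  exists C : R, 0 < C /\
    forall (alpha : R) (u : 'rV[R]_N -> R),
      alpha_p N p < alpha ->
      henon_dirichlet_sol p alpha u ->
      radial u ->
      has_m_nodal_sets m u ->
      0 < u 0 ->
      C * ((alpha + N%:R) / N%:R) `^ (2 / (p - 1)) <= sup_norm u.
Proof.
move=> hN hp; exists 1; split => // alpha u ha [[hcont hC2] [hpde hbd]] _ _ hu0.
have N0 : (0 < N)%N by apply: leq_trans hN.
have a0 : 0 < alpha.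
  apply: le_lt_trans ha; rewrite /alpha_p le_max lexx //.
have hD : forall y, ballN R N y -> forall i j : 'I_N,
    derivable u y (evec i) /\ derivable (pd i u) y (evec j).
  by move=> y hy i j; have [h1 [h2 _]] := hC2 y hy i j.
have b0 : ballN R N 0 by rewrite /ballN /= enorm_lt1 sq0.
have bc y : ballN R N y -> cballN R N y by rewrite /ballN /cballN /=; apply: ltW.
have ne : cballN R N !=set0 by exists 0; apply: bc.
have [c0 _ hmaxu] := EVT_max_rV ne (@cball_compact R N) (within_norm hcont).
pose S := [set `|u x| | x in ballN R N].
have hub : has_ubound S.
  exists `|u c0|; move=> _ [y hy <-]; apply: hmaxu; rewrite inE; exact: bc.
have hM y : ballN R N y -> `|u y| <= sup_norm u.
  by move=> hy; apply: (ub_le_sup hub); exists y.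
set M := sup_norm u in hM *.
have M0 : 0 < M by apply: lt_le_trans hu0 (le_trans (ler_norm _) (hM 0 b0)).
set k := Num.truncn (alpha / 2).
have /andP[hk1 hk2] : k%:R <= alpha / 2 < k.+1%:R by apply: truncn_itv; lra.
have k2 : (2 * k)%:R <= alpha by rewrite natrM; lra.
pose Q := M `^ (p - 1) * M.
pose K : R := k.+1%:R * (4 * k%:R + 2 * N%:R).
have Nr : 3 <= N%:R :> R by rewrite (ler_nat R 3 N).
have kr : 0 <= k%:R :> R by [].
have K0 : 0 < K by rewrite /K; apply: mulr_gt0; [rewrite ltr0n | lra].
pose cc := Q / K.
have Q0 : 0 <= Q by rewrite /Q mulr_ge0 ?powR_ge0 ?ltW.
have cc0 : 0 <= cc by rewrite /cc divr_ge0 // ltW.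
have hcc : cc * k.+1%:R * (4 * k%:R + 2 * N%:R) = Q.
  by rewrite /cc -mulrA -/K divfK // gt_eqF.
have bnd : forall sg : R, sg = 1 \/ sg = -1 -> forall y, ballN R N y -> sg * u y <= cc.
  move=> sg hsg y hy; apply/ler_addgt0Pr => eps e0.
  have [c hc hmax] := EVT_max_rV ne (@cball_compact R N) (within_h (sg:=sg) (cc:=cc) (eps:=eps) (k:=k) hcont).
  have hcs : sq c <= 1 by move: hc; rewrite inE /cballN /= enorm_le1.
  have [sc1|sc1] := ltP (sq c) 1.
    exfalso; apply: (@no_interior_max R N u sg cc eps Q k c N0 e0 hD sc1 _ _ hcc).
      by move=> y0 hy0; apply: hmax; rewrite inE.
    have bcc : ballN R N c by rewrite /ballN /= enorm_lt1.
    exact: (pde_bound hp a0 k2 hsg (hM c bcc) sc1 (hpde c bcc)).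
  have sc : sq c = 1 by apply/eqP; rewrite eq_le hcs sc1.
  have ec : enorm c = 1 by rewrite enormE sc sqrtr1.
  have := hmax y; rewrite inE => /(_ (bc y hy)).
  rewrite (hbd c ec) sc mulr0 expr1n !mulr1 add0r.
  have := sq_ge0 y => sy.
  have : 0 <= cc * sq y ^+ k.+1 by rewrite mulr_ge0 // exprn_ge0.
  have : 0 <= eps * sq y by rewrite mulr_ge0 // ltW.
  lra.
have hu y : ballN R N y -> `|u y| <= cc.
  move=> hy; rewrite ler_norml; apply/andP; split.
    by have := bnd (-1) (or_intror erefl) y hy; rewrite mulN1r; lra.
  by have := bnd 1 (or_introl erefl) y hy; rewrite mul1r.
have Mcc : M <= cc.
  apply: ge_sup; first by exists `|u 0|, 0.
  by move=> _ [y hy <-]; apply: hu.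
have KM : K <= M `^ (p - 1).
  move: Mcc; rewrite /cc /Q ler_pdivlMr // => h.
  by rewrite -(ler_pM2r M0) mulrC.
set a := (alpha + N%:R) / N%:R.
have Np : 0 < N%:R :> R by lra.
have a1 : 0 <= a by rewrite /a divr_ge0; lra.
have aK1 : a <= 2 * k%:R + 2.
  rewrite /a ler_pdivrMr //; nra.
have aK2 : a <= 2 * k%:R + N%:R.
  rewrite /a ler_pdivrMr //; nra.
have aK : a ^+ 2 <= K.
  have -> : K = (2 * k%:R + 2) * (2 * k%:R + N%:R) by rewrite /K; ring.
  by rewrite expr2; apply: ler_pM.
have pi0 : 0 <= (p - 1)^-1 by rewrite invr_ge0; lra.
rewrite mul1r.
have -> : a `^ (2 / (p - 1)) = (a `^ 2) `^ (p - 1)^-1 by rewrite powRrM.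
have -> : M = (M `^ (p - 1)) `^ (p - 1)^-1.
  by rewrite -powRrM mulfV ?powRr1 ?ltW // gt_eqF // subr_gt0.
apply: ge0_ler_powR => //; rewrite ?nnegrE ?powR_ge0 //.
rewrite powR_mulrn //.
exact: le_trans aK KM.
Qed.
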